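(* Let $H$ be a finitely generated group, let $\phi\in\operatorname{Aut}(H)$ and let $K$ be a proper subgroup of $H$. Let $G=H\ast_{(K,\phi)}=\langle H, t;\ tkt^{-1}=\phi(k),\ k\in K\rangle$. Then $G$ is residually finite if and only if $H$ is residually finite and $K$ is residually separable in $H$.
   Context: For a group $H$, $\phi\in\operatorname{Aut}(H)$ and a proper subgroup $K\lneq H$, the automorphism-induced HNN-extension $H\ast_{(K,\phi)}$ is the group given by the relative presentation $\langle H, t;\ tkt^{-1}=\phi(k),\ k\in K\rangle$. A subgroup $K$ of $H$ is residually separable in $H$ if for every $x\in H\setminus K$ there exists a finite index normal subgroup $N$ of $H$ such that $x\notin KN$. *)

(* Defs.v *)
From Stdlib Require Import List.
Import ListNotations.

Record group := Group {
  carrier :> Type;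
  mul : carrier -> carrier -> carrier;
  one : carrier;
  inv : carrier -> carrier;
  mulA : forall x y z, mul x (mul y z) = mul (mul x y) z;
  mul1g : forall x, mul one x = x;
  mulVg : forall x, mul (inv x) x = one
}.

Arguments mul {g}.
Arguments one {g}.
Arguments inv {g}.

Definition is_subgroup {G : group} (S : G -> Prop) : Prop :=
  S one /\ (forall x y, S x -> S y -> S (mul x y)) /\ (forall x, S x -> S (inv x)).

Definition is_proper_subgroup {G : group} (S : G -> Prop) : Prop :=
  is_subgroup S /\ exists x : G, ~ S x.

Definition is_normal_subgroup {G : group} (N : G -> Prop) : Prop :=
  is_subgroup N /\ forall g x, N x -> N (mul (mul g x) (inv g)).

Definition finite_index {G : group} (N : G -> Prop) : Prop :=
  exists reps : list G, forall g : G, exists r, In r reps /\ N (mul (inv r) g).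

Inductive generated {G : group} (S : list G) : G -> Prop :=
  | gen_one : generated S one
  | gen_base : forall x, In x S -> generated S x
  | gen_mul : forall x y, generated S x -> generated S y -> generated S (mul x y)
  | gen_inv : forall x, generated S x -> generated S (inv x).

Definition finitely_generated (G : group) : Prop :=
  exists S : list G, forall x : G, generated S x.

Definition is_hom {G L : group} (f : G -> L) : Prop :=
  forall x y, f (mul x y) = mul (f x) (f y).

Definition is_aut {G : group} (phi : G -> G) : Prop :=
  is_hom phi /\ (forall x y, phi x = phi y -> x = y) /\ (forall y, exists x, phi x = y).

Definition residually_finite (G : group) : Prop :=
  forall x : G, x <> one ->
    exists N : G -> Prop, is_normal_subgroup N /\ finite_index N /\ ~ N x.

Definition residually_separable {H : group} (K : H -> Prop) : Prop :=
  forall x : H, ~ K x ->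
    exists N : H -> Prop, is_normal_subgroup N /\ finite_index N /\
      ~ (exists k n, K k /\ N n /\ x = mul k n).

(* (G, i, t) is the automorphism-induced HNN extension  <H, t ; t k t^-1 = phi k, k in K>,
   characterised by its universal property (defines G up to isomorphism). *)
Definition is_HNN_extension {H : group} (phi : H -> H) (K : H -> Prop)
    (G : group) (i : H -> G) (t : G) : Prop :=
  is_hom i /\
  (forall k, K k -> mul (mul t (i k)) (inv t) = i (phi k)) /\
  (forall (L : group) (f : H -> L) (s : L),
     is_hom f ->
     (forall k, K k -> mul (mul s (f k)) (inv s) = f (phi k)) ->
     (exists g : G -> L, is_hom g /\ (forall h, g (i h) = f h) /\ g t = s) /\
     (forall g1 g2 : G -> L, is_hom g1 -> is_hom g2 ->
        (forall h, g1 (i h) = g2 (i h)) -> g1 t = g2 t -> forall x, g1 x = g2 x)).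

(* Main.v *)
Require Import Defs.
From Stdlib Require Import List Arith Lia Classical ClassicalEpsilon FunctionalExtensionality ProofIrrelevance PropExtensionality.
Import ListNotations.


Section GroupLemmas.
Context {G : group}.
Implicit Types x y z : G.

Lemma mulgV x : mul x (inv x) = one.
Proof.
  transitivity (mul (mul (inv (inv x)) (inv x)) (mul x (inv x))).
  { rewrite mulVg, mul1g. reflexivity. }
  rewrite <- mulA. rewrite (mulA _ (inv x) x (inv x)). rewrite mulVg, mul1g.
  apply mulVg.
Qed.

Lemma mulg1 x : mul x one = x.
Proof. rewrite <- (mulVg _ x), mulA, mulgV, mul1g. reflexivity. Qed.

Lemma mulKg x y : mul (inv x) (mul x y) = y.
Proof. rewrite mulA, mulVg, mul1g. reflexivity. Qed.

Lemma mulKVg x y : mul x (mul (inv x) y) = y.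
Proof. rewrite mulA, mulgV, mul1g. reflexivity. Qed.

Lemma mulgK x y : mul (mul y x) (inv x) = y.
Proof. rewrite <- mulA, mulgV, mulg1. reflexivity. Qed.

Lemma mulgKV x y : mul (mul y (inv x)) x = y.
Proof. rewrite <- mulA, mulVg, mulg1. reflexivity. Qed.

Lemma mulg_cancel_l x y z : mul x y = mul x z -> y = z.
Proof. intro E. rewrite <- (mulKg x y), E, mulKg. reflexivity. Qed.

Lemma mulg_cancel_r x y z : mul y x = mul z x -> y = z.
Proof. intro E. rewrite <- (mulgK x y), E, mulgK. reflexivity. Qed.

Lemma inv_uniq x y : mul x y = one -> inv x = y.
Proof. intro E. apply (mulg_cancel_l x). rewrite mulgV, E. reflexivity. Qed.

Lemma invK x : inv (inv x) = x.
Proof. apply inv_uniq. apply mulVg. Qed.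

Lemma invM x y : inv (mul x y) = mul (inv y) (inv x).
Proof. apply inv_uniq. rewrite <- mulA, (mulA _ y (inv y)), mulgV, mul1g, mulgV. reflexivity. Qed.

Lemma inv1 : inv (@one G) = one.
Proof. apply inv_uniq. apply mul1g. Qed.

Lemma inv_inj x y : inv x = inv y -> x = y.
Proof. intro E. rewrite <- (invK x), E, invK. reflexivity. Qed.

Lemma mulg_eq1 x y : mul x y = one -> y = inv x.
Proof. intro E. symmetry. apply inv_uniq; auto. Qed.

Lemma mulg_eq_inv x y : mul (inv x) y = one -> x = y.
Proof. intro E. apply mulg_eq1 in E. rewrite invK in E. auto. Qed.
End GroupLemmas.

Section HomLemmas.
Context {G L : group} (f : G -> L) (Hf : is_hom f).
Lemma hom_one : f one = one.
Proof.
  apply (mulg_cancel_l (f one)). rewrite <- Hf, !mulg1. reflexivity.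
Qed.
Lemma hom_inv x : f (inv x) = inv (f x).
Proof.
  symmetry. apply inv_uniq. rewrite <- Hf, mulgV. apply hom_one.
Qed.
End HomLemmas.

Lemma hom_comp {A B C : group} (f : A -> B) (g : B -> C) :
  is_hom f -> is_hom g -> is_hom (fun x => g (f x)).
Proof. intros Hf Hg x y. rewrite Hf, Hg. reflexivity. Qed.


Lemma coset_alg {G : group} (r p g : G) :
  mul (inv (mul (inv r) p)) (mul (inv r) g) = mul (inv p) g.
Proof. rewrite invM, invK, <- mulA, mulKVg. reflexivity. Qed.

Section Sub.
Context {G : group} (N : G -> Prop) (HN : is_subgroup N).
Lemma sub1 : N one. Proof. apply HN. Qed.
Lemma subM x y : N x -> N y -> N (mul x y). Proof. apply HN. Qed.
Lemma subV x : N x -> N (inv x). Proof. apply HN. Qed.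
Lemma subV_iff x : N (inv x) <-> N x.
Proof. split; intro H. rewrite <- invK. apply subV; auto. apply subV; auto. Qed.
Lemma subM_l x y : N x -> (N (mul x y) <-> N y).
Proof.
  intros Hx; split; intro H.
  - rewrite <- (mulKg x y). apply subM; auto. apply subV; auto.
  - apply subM; auto.
Qed.
Lemma subM_r x y : N y -> (N (mul x y) <-> N x).
Proof.
  intros Hy; split; intro H.
  - rewrite <- (mulgK y x). apply subM; auto. apply subV; auto.
  - apply subM; auto.
Qed.
End Sub.

Lemma normal_sub {G : group} (N : G -> Prop) : is_normal_subgroup N -> is_subgroup N.
Proof. intros [H _]; exact H. Qed.

Lemma normal_conj {G : group} (N : G -> Prop) : is_normal_subgroup N ->
  forall g x, N x -> N (mul (mul g x) (inv g)).
Proof. intros [_ H]; exact H. Qed.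

Lemma normal_conj' {G : group} (N : G -> Prop) : is_normal_subgroup N ->
  forall g x, N x -> N (mul (mul (inv g) x) g).
Proof. intros HN g x Hx. rewrite <- (invK g) at 2. apply normal_conj; auto. Qed.

Lemma fi_ext {G : group} (N N' : G -> Prop) :
  (forall x, N x <-> N' x) -> finite_index N -> finite_index N'.
Proof.
  intros E [R HR]. exists R. intro g. destruct (HR g) as [r [Hr Hn]].
  exists r. split; auto. apply E; auto.
Qed.

Lemma fi_all {G : group} : finite_index (fun _ : G => True).
Proof. exists [one]. intro g. exists one. simpl. auto. Qed.

Lemma normal_all {G : group} : is_normal_subgroup (fun _ : G => True).
Proof. repeat split; auto. Qed.

Lemma normal_ext {G : group} (N N' : G -> Prop) :
  (forall x, N x <-> N' x) -> is_normal_subgroup N -> is_normal_subgroup N'.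
Proof.
  intros E [[H1 [H2 H3]] H4]. repeat split.
  - apply E; auto.
  - intros x y Hx Hy. apply E. apply H2; apply E; auto.
  - intros x Hx. apply E. apply H3; apply E; auto.
  - intros g x Hx. apply E. apply H4; apply E; auto.
Qed.

Lemma fi_preimage {G L : group} (f : G -> L) (N : L -> Prop) :
  is_hom f -> is_subgroup N -> finite_index N -> finite_index (fun h => N (f h)).
Proof.
  intros Hf HN [R HR].
  set (pick := fun r : L => epsilon (inhabits (@one G)) (fun h => N (mul (inv r) (f h)))).
  exists (map pick R). intro g. destruct (HR (f g)) as [r [Hr Hn]].
  exists (pick r). split. apply in_map; auto.
  assert (Hp : N (mul (inv r) (f (pick r)))).
  { unfold pick. apply (epsilon_spec (inhabits one) (fun h => N (mul (inv r) (f h)))). eauto. }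
  rewrite Hf, (hom_inv f Hf).
  rewrite <- (coset_alg r).
  apply subM; auto. apply subV; auto.
Qed.

Lemma fi_inter {G : group} (N1 N2 : G -> Prop) :
  is_subgroup N1 -> is_subgroup N2 -> finite_index N1 -> finite_index N2 ->
  finite_index (fun x => N1 x /\ N2 x).
Proof.
  intros H1 H2 [R1 HR1] [R2 HR2].
  set (pick := fun rr : G * G => epsilon (inhabits (@one G))
     (fun h => N1 (mul (inv (fst rr)) h) /\ N2 (mul (inv (snd rr)) h))).
  exists (map pick (list_prod R1 R2)). intro g.
  destruct (HR1 g) as [r1 [Hr1 Hn1]]. destruct (HR2 g) as [r2 [Hr2 Hn2]].
  exists (pick (r1, r2)). split. apply in_map, in_prod; auto.
  assert (Hp : N1 (mul (inv r1) (pick (r1,r2))) /\ N2 (mul (inv r2) (pick (r1,r2)))).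
  { unfold pick. apply (epsilon_spec (inhabits one)
     (fun h => N1 (mul (inv (fst (r1,r2))) h) /\ N2 (mul (inv (snd (r1,r2))) h))). eauto. }
  destruct Hp as [Hp1 Hp2].
  split.
  - rewrite <- (coset_alg r1). apply subM; auto. apply subV; auto.
  - rewrite <- (coset_alg r2). apply subM; auto. apply subV; auto.
Qed.

Lemma normal_preimage {G L : group} (f : G -> L) (N : L -> Prop) :
  is_hom f -> is_normal_subgroup N -> is_normal_subgroup (fun h => N (f h)).
Proof.
  intros Hf [[H1 [H2 H3]] H4]. repeat split.
  - rewrite (hom_one f Hf). auto.
  - intros x y Hx Hy. rewrite Hf. auto.
  - intros x Hx. rewrite (hom_inv f Hf). auto.
  - intros g x Hx. rewrite !Hf, (hom_inv f Hf). auto.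
Qed.

Lemma normal_inter {G : group} (N1 N2 : G -> Prop) :
  is_normal_subgroup N1 -> is_normal_subgroup N2 -> is_normal_subgroup (fun x => N1 x /\ N2 x).
Proof.
  intros [[a1 [b1 c1]] d1] [[a2 [b2 c2]] d2]. repeat split; intros; try tauto.
  - apply b1; tauto.
  - apply b2; tauto.
  - apply c1; tauto.
  - apply c2; tauto.
  - apply d1; tauto.
  - apply d2; tauto.
Qed.


Record perm (X : Type) (R : X -> X -> Prop) (I : X -> Prop) := Perm {
  fw : X -> X; bw : X -> X;
  fwbw : forall x, fw (bw x) = x;
  bwfw : forall x, bw (fw x) = x;
  fwR : forall x y, R x y -> R (fw x) (fw y);
  bwR : forall x y, R x y -> R (bw x) (bw y);
  fwI : forall x, I (fw x) <-> I x
}.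
Arguments fw {X R I}.
Arguments bw {X R I}.
Arguments Perm {X R I}.

Section SymG.
Context (X : Type) (R : X -> X -> Prop) (I : X -> Prop).

Lemma perm_ext (p q : perm X R I) : (forall x, fw p x = fw q x) -> p = q.
Proof.
  intro E.
  assert (Eb : forall x, bw p x = bw q x).
  { intro x. rewrite <- (fwbw _ _ _ q x) at 1. rewrite <- E. apply bwfw. }
  destruct p as [f1 b1 a1 c1 d1 e1 g1], q as [f2 b2 a2 c2 d2 e2 g2]; simpl in *.
  assert (f1 = f2) by (apply functional_extensionality; auto).
  assert (b1 = b2) by (apply functional_extensionality; auto).
  subst. f_equal; apply proof_irrelevance.
Qed.

Lemma bwI (p : perm X R I) x : I (bw p x) <-> I x.
Proof. rewrite <- (fwI _ _ _ p). rewrite fwbw. tauto. Qed.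

Definition pmul (p q : perm X R I) : perm X R I.
Proof.
  refine (Perm (fun x => fw p (fw q x)) (fun x => bw q (bw p x)) _ _ _ _ _).
  - intro x. rewrite fwbw, fwbw. auto.
  - intro x. rewrite bwfw, bwfw. auto.
  - intros x y H. apply fwR, fwR; auto.
  - intros x y H. apply bwR, bwR; auto.
  - intro x. rewrite !fwI. tauto.
Defined.

Definition pone : perm X R I.
Proof.
  refine (Perm (fun x => x) (fun x => x) _ _ _ _ _); auto. tauto.
Defined.

Definition pinv (p : perm X R I) : perm X R I.
Proof.
  refine (Perm (bw p) (fw p) _ _ _ _ _).
  - apply bwfw. - apply fwbw. - apply bwR. - apply fwR. - apply bwI.
Defined.

Definition SymG : group.
Proof.
  refine (Group (perm X R I) pmul pone pinv _ _ _).
  - intros. apply perm_ext. reflexivity.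
  - intros. apply perm_ext. reflexivity.
  - intros. apply perm_ext. intro z. simpl. apply bwfw.
Defined.

Lemma SymG_mul (p q : SymG) (z : X) : fw (mul p q : perm X R I) z = fw (p : perm X R I) (fw (q : perm X R I) z).
Proof. reflexivity. Qed.
Lemma SymG_one (z : X) : fw (one : SymG) z = z.
Proof. reflexivity. Qed.
Lemma SymG_inv (p : SymG) (z : X) : fw (inv p : perm X R I) z = bw (p : perm X R I) z.
Proof. reflexivity. Qed.
End SymG.


Definition phinv {H : group} (phi : H -> H) (y : H) : H :=
  epsilon (inhabits one) (fun x => phi x = y).

Section Aut.
Context {H : group} (phi : H -> H) (Haut : is_aut phi).
Lemma phi_hom : is_hom phi. Proof. apply Haut. Qed.
Lemma phi_phinv y : phi (phinv phi y) = y.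
Proof.
  unfold phinv. destruct Haut as [_ [_ Hs]].
  apply (epsilon_spec (inhabits one) (fun x => phi x = y)). apply Hs.
Qed.
Lemma phinv_phi x : phinv phi (phi x) = x.
Proof. destruct Haut as [_ [Hi _]]. apply Hi. apply phi_phinv. Qed.
Lemma phinv_hom : is_hom (phinv phi).
Proof.
  intros x y. destruct Haut as [Hh [Hi _]]. apply Hi.
  rewrite Hh, !phi_phinv. reflexivity.
Qed.
Lemma phinv_aut : is_aut (phinv phi).
Proof.
  split. apply phinv_hom. split.
  - intros x y E. rewrite <- (phi_phinv x), E, phi_phinv. auto.
  - intro y. exists (phi y). apply phinv_phi.
Qed.
End Aut.

Definition bad {H : group} (phi : H -> H) (P : H -> Prop) (e1 e2 : bool) (g2 : H) : Prop :=
  (e1 = true /\ e2 = false /\ P g2) \/ (e1 = false /\ e2 = true /\ P (phinv phi g2)).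

Fixpoint reduced {H : group} (phi : H -> H) (P : H -> Prop) (l : list (bool * H)) : Prop :=
  match l with
  | (e1, _) :: tl =>
      match tl with
      | (e2, g2) :: _ => ~ bad phi P e1 e2 g2 /\ reduced phi P tl
      | [] => True
      end
  | [] => True
  end.

Lemma reduced_head {H : group} phi P e (g g' : H) l :
  reduced phi P ((e, g) :: l) -> reduced phi P ((e, g') :: l).
Proof. destruct l as [|[]]; simpl; auto. Qed.

Lemma reduced_tail {H : group} phi P (a : bool * H) l :
  reduced phi P (a :: l) -> reduced phi P l.
Proof. destruct a; destruct l as [|[]]; simpl; tauto. Qed.

Section Words.
Context {H G : group} (phi : H -> H) (K : H -> Prop) (i : H -> G) (t : G).

Definition tpow (e : bool) : G := if e then t else inv t.

Fixpoint eval (h0 : H) (l : list (bool * H)) : G :=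
  match l with
  | [] => i h0
  | (e, g) :: l' => mul (mul (i g) (tpow e)) (eval h0 l')
  end.

Inductive GT : G -> Prop :=
  | GT_one : GT one
  | GT_i : forall h, GT (i h)
  | GT_t : GT t
  | GT_mul : forall x y, GT x -> GT y -> GT (mul x y)
  | GT_inv : forall x, GT x -> GT (inv x).

Hypothesis Haut : is_aut phi.
Hypothesis HK : is_subgroup K.
Hypothesis HNN : is_HNN_extension phi K G i t.

Lemma i_hom : is_hom i. Proof. apply HNN. Qed.

Lemma rel1 k : K k -> mul (mul t (i k)) (inv t) = i (phi k).
Proof. apply HNN. Qed.

Lemma rel2 g : K (phinv phi g) -> mul (mul (inv t) (i g)) t = i (phinv phi g).
Proof.
  intro Hk. pose proof (rel1 _ Hk) as E. rewrite (phi_phinv phi Haut) in E.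
  rewrite <- E. rewrite !mulA, mulVg, mul1g, mulgKV. reflexivity.
Qed.

Lemma prepend_h h h0 l : reduced phi K l ->
  exists h0' l', reduced phi K l' /\ eval h0' l' = mul (i h) (eval h0 l).
Proof.
  intro Hr. destruct l as [|[e g] l].
  - exists (mul h h0), []. split. simpl; auto. simpl. apply i_hom.
  - exists h0, ((e, mul h g) :: l). split. eapply reduced_head; eauto.
    simpl. rewrite i_hom, !mulA. reflexivity.
Qed.

Lemma prepend_t e h0 l : reduced phi K l ->
  exists h0' l', reduced phi K l' /\ eval h0' l' = mul (tpow e) (eval h0 l).
Proof.
  intro Hr. destruct l as [|[e2 g2] l].
  - exists h0, [(e, one)]. split. simpl; auto. simpl.
    rewrite (hom_one i i_hom), mul1g. reflexivity.
  - destruct (classic (bad phi K e e2 g2)) as [Hb|Hb].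
    + destruct Hb as [[-> [-> Hk]] | [-> [-> Hk]]].
      * destruct (prepend_h (phi g2) h0 l) as [h0' [l' [Hr' E]]].
        eapply reduced_tail; eauto.
        exists h0', l'. split; auto. rewrite E. simpl.
        rewrite <- (rel1 _ Hk). rewrite !mulA. reflexivity.
      * destruct (prepend_h (phinv phi g2) h0 l) as [h0' [l' [Hr' E]]].
        eapply reduced_tail; eauto.
        exists h0', l'. split; auto. rewrite E. simpl.
        rewrite <- (rel2 _ Hk). rewrite !mulA. reflexivity.
    + exists h0, ((e, one) :: (e2, g2) :: l). split.
      * simpl. split; auto.
      * simpl. rewrite (hom_one i i_hom), mul1g. reflexivity.
Qed.

Definition WP (x : G) : Prop := exists h0 l, reduced phi K l /\ x = eval h0 l.

Lemma GT_WP y : GT y -> (forall x, WP x -> WP (mul y x)) /\ (forall x, WP x -> WP (mul (inv y) x)).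
Proof.
  induction 1.
  - split; intros x Hx; [rewrite mul1g | rewrite inv1, mul1g]; auto.
  - split; intros x [h0 [l [Hr ->]]].
    + destruct (prepend_h h h0 l Hr) as [a [b [c d]]]. exists a, b; auto.
    + rewrite <- (hom_inv i i_hom). destruct (prepend_h (inv h) h0 l Hr) as [a [b [c d]]]. exists a, b; auto.
  - split; intros x [h0 [l [Hr ->]]].
    + destruct (prepend_t true h0 l Hr) as [a [b [c d]]]. exists a, b; auto.
    + destruct (prepend_t false h0 l Hr) as [a [b [c d]]]. exists a, b; auto.
  - destruct IHGT1 as [A1 B1], IHGT2 as [A2 B2]. split; intros z Hz.
    + rewrite <- mulA. auto.
    + rewrite invM, <- mulA. auto.
  - destruct IHGT as [A B]. split; intros z Hz.
    + auto.
    + rewrite invK. auto.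
Qed.

Definition SubGT : group.
Proof.
  refine (Group {x : G | GT x}
    (fun a b => exist _ (mul (proj1_sig a) (proj1_sig b)) (GT_mul _ _ (proj2_sig a) (proj2_sig b)))
    (exist _ one GT_one)
    (fun a => exist _ (inv (proj1_sig a)) (GT_inv _ (proj2_sig a))) _ _ _).
  - intros [x ?] [y ?] [z ?]. apply eq_sig_hprop. intros; apply proof_irrelevance. simpl. apply mulA.
  - intros [x ?]. apply eq_sig_hprop. intros; apply proof_irrelevance. simpl. apply mul1g.
  - intros [x ?]. apply eq_sig_hprop. intros; apply proof_irrelevance. simpl. apply mulVg.
Defined.

Lemma all_GT x : GT x.
Proof.
  destruct HNN as [Hi [Hrel Hu]].
  set (f := fun h => (exist GT (i h) (GT_i h) : SubGT)).
  set (s := (exist GT t GT_t : SubGT)).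
  assert (Hf : is_hom f).
  { intros a b. unfold f. apply eq_sig_hprop. intros; apply proof_irrelevance. simpl. apply Hi. }
  assert (Hfr : forall k, K k -> mul (mul s (f k)) (inv s) = f (phi k)).
  { intros k Hk. apply eq_sig_hprop. intros; apply proof_irrelevance. simpl. apply Hrel; auto. }
  destruct (Hu SubGT f s Hf Hfr) as [[g [Hg [Hgi Hgt]]] _].
  destruct (Hu G i t Hi Hrel) as [_ Uniq].
  assert (E : proj1_sig (g x) = x).
  { apply (Uniq (fun x => proj1_sig (g x)) (fun x => x)).
    - intros a b. rewrite Hg. reflexivity.
    - intros a b. reflexivity.
    - intro h. rewrite Hgi. reflexivity.
    - rewrite Hgt. reflexivity. }
  rewrite <- E. apply proj2_sig.
Qed.

Lemma all_words x : exists h0 l, reduced phi K l /\ x = eval h0 l.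
Proof.
  assert (W1 : WP one). { exists one, []. simpl. split; auto. symmetry. apply (hom_one i i_hom). }
  destruct (GT_WP x (all_GT x)) as [A _]. specialize (A one W1). rewrite mulg1 in A. exact A.
Qed.

End Words.


Definition swap {X : Type} (x y z : X) : X :=
  if excluded_middle_informative (z = x) then y
  else if excluded_middle_informative (z = y) then x else z.

Lemma swap_x {X : Type} (x y : X) : swap x y x = y.
Proof. unfold swap. destruct excluded_middle_informative; congruence. Qed.

Lemma swap_other {X : Type} (x y z : X) : z <> x -> z <> y -> swap x y z = z.
Proof. intros. unfold swap. repeat destruct excluded_middle_informative; congruence. Qed.

Lemma swap_invol {X : Type} (x y z : X) : swap x y (swap x y z) = z.
Proof. unfold swap. repeat (destruct excluded_middle_informative; subst; try congruence). Qed.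

Lemma swap_Q {X : Type} (Q : X -> Prop) (x y z : X) : Q x -> Q y -> (Q (swap x y z) <-> Q z).
Proof. intros. unfold swap. repeat (destruct excluded_middle_informative; subst; try tauto). Qed.

Lemma extend {X : Type} (cs : list (X * X)) :
  NoDup (map fst cs) -> NoDup (map snd cs) ->
  exists s si : X -> X,
    (forall x, s (si x) = x) /\ (forall x, si (s x) = x) /\
    (forall c, In c cs -> s (fst c) = snd c) /\
    (forall Q : X -> Prop, (forall c, In c cs -> Q (fst c) /\ Q (snd c)) -> forall x, Q (s x) <-> Q x).
Proof.
  induction cs as [|[a b] cs IH]; intros Hf Hs.
  - exists (fun x => x), (fun x => x). repeat split; auto; simpl; tauto.
  - simpl in Hf, Hs. inversion Hf as [|? ? Ha Hf']; subst. inversion Hs as [|? ? Hb Hs']; subst.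
    destruct (IH Hf' Hs') as [s [si [A [B [C D]]]]].
    exists (fun z => swap (s a) b (s z)), (fun z => si (swap (s a) b z)).
    split; [|split; [|split]].
    + intro x. rewrite A. apply swap_invol.
    + intro x. rewrite swap_invol. apply B.
    + intros [a' b'] [E|Hin].
      * inversion E; subst. simpl. apply swap_x.
      * simpl. pose proof (C _ Hin) as Cx; simpl in Cx; rewrite Cx. simpl. apply swap_other.
        -- intro E. apply Ha. rewrite <- (B a), <- E, <- Cx, B.
           apply (in_map fst) in Hin. exact Hin.
        -- intro E. subst. apply Hb. apply (in_map snd) in Hin. exact Hin.
    + intros Q HQ x. simpl in HQ.
      assert (Q1 : Q a /\ Q b) by (apply (HQ (a, b)); auto).
      assert (D' := D Q (fun c Hc => HQ c (or_intror Hc))).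
      rewrite swap_Q. apply D'. apply D'; tauto. tauto.
Qed.

Definition RN {H : group} (N : H -> Prop) (p q : H * nat) : Prop :=
  snd p = snd q /\ N (mul (inv (fst p)) (fst q)).
Definition Ib {H : group} (n : nat) (p : H * nat) : Prop := snd p <= n.

Section RNeq.
Context {H : group} (N : H -> Prop) (HN : is_subgroup N).
Lemma RN_refl p : RN N p p.
Proof. split; auto. rewrite mulVg. apply sub1; auto. Qed.
Lemma RN_sym p q : RN N p q -> RN N q p.
Proof. intros [E Hn]. split; auto. replace (mul (inv (fst q)) (fst p)) with (inv (mul (inv (fst p)) (fst q))) by (rewrite invM, invK; reflexivity). apply subV; auto. Qed.
Lemma RN_trans p q r : RN N p q -> RN N q r -> RN N p r.
Proof.
  intros [E1 H1] [E2 H2]. split. congruence.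
  rewrite <- (mulKVg (fst q) (fst r)), mulA. apply subM; auto.
Qed.
End RNeq.

Fixpoint all_lists {A : Type} (D : list A) (k : nat) : list (list A) :=
  match k with
  | 0 => [[]]
  | S k' => flat_map (fun d => map (cons d) (all_lists D k')) D
  end.

Lemma all_lists_in {A : Type} (D : list A) k c :
  length c = k -> (forall x, In x c -> In x D) -> In c (all_lists D k).
Proof.
  revert c; induction k; intros c Hl Hc.
  - destruct c; simpl in *; try discriminate. auto.
  - destruct c as [|x c]; simpl in *; try discriminate.
    apply in_flat_map. exists x. split; auto. apply in_map. apply IHk; auto.
Qed.

Lemma map_eq_in {A B : Type} (f g : A -> B) l x : map f l = map g l -> In x l -> f x = g x.
Proof.
  induction l; simpl; intros E Hx; [contradiction|]. inversion E.
  destruct Hx; subst; auto.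
Qed.

Section Kernel.
Context {H G : group} (N : H -> Prop) (HN : is_normal_subgroup N) (HNfi : finite_index N) (n : nat).
Context (rho : G -> SymG (H * nat) (RN N) (Ib n)) (Hrho : is_hom rho).

Definition KerM (g : G) : Prop := forall p, Ib n p -> RN N (fw (rho g : perm _ _ _) p) p.

Lemma rho_mul g1 g2 p : fw (rho (mul g1 g2) : perm _ _ _) p = fw (rho g1 : perm _ _ _) (fw (rho g2 : perm _ _ _) p).
Proof. rewrite Hrho. reflexivity. Qed.
Lemma rho_inv g p : fw (rho (inv g) : perm _ _ _) p = bw (rho g : perm _ _ _) p.
Proof. rewrite (hom_inv rho Hrho). reflexivity. Qed.
Lemma rho_one p : fw (rho one : perm _ _ _) p = p.
Proof. rewrite (hom_one rho Hrho). reflexivity. Qed.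

Lemma KerM_normal : is_normal_subgroup KerM.
Proof.
  pose proof (normal_sub _ HN) as HS. unfold KerM.
  split; [split; [|split]|].
  - intros z Hz. rewrite rho_one. apply RN_refl; auto.
  - intros x y Hx Hy z Hz. rewrite rho_mul. apply (RN_trans _ HS _ (fw (rho y : perm _ _ _) z)); [|apply Hy; auto].
    apply Hx. apply (fwI _ _ _ (rho y : perm _ _ _)). auto.
  - intros x Hx z Hz. rewrite rho_inv. apply RN_sym; auto.
    pose proof (Hx (bw (rho x : perm _ _ _) z)) as Kx. rewrite fwbw in Kx. apply Kx.
    apply (bwI _ _ _ (rho x : perm _ _ _)). auto.
  - intros g x Hx z Hz. rewrite !rho_mul, rho_inv.
    pose proof (fwR _ _ _ (rho g : perm _ _ _) _ _ (Hx (bw (rho g : perm _ _ _) z) ltac:(apply (bwI _ _ _ (rho g : perm _ _ _)); auto))) as Kx.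
    rewrite fwbw in Kx. exact Kx.
Qed.

Lemma KerM_fi : finite_index KerM.
Proof.
  pose proof (normal_sub _ HN) as HS.
  destruct HNfi as [RL HRL].
  set (D := list_prod RL (seq 0 (S n))).
  assert (HD : forall q, Ib n q -> exists d, In d D /\ RN N q d).
  { intros [h y] Hq. destruct (HRL h) as [r [Hr Hn]]. exists (r, y). split.
    - apply in_prod; auto. apply in_seq. unfold Ib in Hq. simpl in Hq. lia.
    - apply RN_sym; auto. split; auto. }
  set (canon := fun q => epsilon (inhabits (one, 0)) (fun d => In d D /\ RN N q d)).
  assert (Hc : forall q, Ib n q -> In (canon q) D /\ RN N q (canon q)).
  { intros q Hq. unfold canon. apply (epsilon_spec (inhabits (one, 0)) (fun d => In d D /\ RN N q d)). auto. }
  assert (HDI : forall d, In d D -> Ib n d).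
  { intros [h y] Hd. apply in_prod_iff in Hd. destruct Hd as [_ Hy]. apply in_seq in Hy. unfold Ib; simpl; lia. }
  set (code := fun g => map (fun d => canon (fw (rho g : perm _ _ _) d)) D).
  set (pick := fun c => epsilon (inhabits (@one G)) (fun g => code g = c)).
  exists (map pick (all_lists D (length D))).
  intro g. exists (pick (code g)). split.
  - apply in_map. apply all_lists_in. unfold code. apply length_map.
    intros x Hx. unfold code in Hx. apply in_map_iff in Hx. destruct Hx as [d [<- Hd]].
    apply Hc. apply (fwI _ _ _ (rho g : perm _ _ _)). auto.
  - assert (Hp : code (pick (code g)) = code g).
    { unfold pick. apply (epsilon_spec (inhabits one) (fun g' => code g' = code g)). eauto. }
    set (g' := pick (code g)) in *.
    intros p Hp0. rewrite rho_mul, rho_inv. apply RN_sym; auto.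
    rewrite <- (bwfw _ _ _ (rho g' : perm _ _ _) p) at 1. apply bwR.
    destruct (HD p Hp0) as [d [Hd Hpd]].
    assert (E := map_eq_in _ _ _ _ Hp Hd). simpl in E.
    assert (Ig : Ib n (fw (rho g : perm _ _ _) d)) by (apply fwI; auto).
    assert (Ig' : Ib n (fw (rho g' : perm _ _ _) d)) by (apply fwI; auto).
    apply (RN_trans _ HS _ (fw (rho g' : perm _ _ _) d)). apply fwR; auto.
    apply (RN_trans _ HS _ (canon (fw (rho g' : perm _ _ _) d))). apply Hc; auto.
    rewrite E. apply (RN_trans _ HS _ (fw (rho g : perm _ _ _) d)).
    apply RN_sym; auto. apply Hc; auto. apply fwR. apply RN_sym; auto.
Qed.
End Kernel.


Lemma conj_alg {G : group} (a b r q : G) :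
  mul (inv (mul (mul a (inv r)) q)) (mul (mul b (inv r)) q) =
  mul (mul (mul (inv q) r) (mul (inv a) b)) (inv (mul (inv q) r)).
Proof. rewrite !invM, !invK, !mulA. reflexivity. Qed.

Section Core.
Context {H G : group} (phi : H -> H) (K : H -> Prop) (i : H -> G) (t : G).
Hypothesis Haut : is_aut phi.
Hypothesis HK : is_subgroup K.
Hypothesis HNN : is_HNN_extension phi K G i t.
Context (N : H -> Prop) (HN : is_normal_subgroup N) (Nphi : forall h, N h <-> N (phi h)).

Definition KN (z : H) : Prop := exists k n, K k /\ N n /\ z = mul k n.

Lemma KN_sub : is_subgroup KN.
Proof.
  pose proof (normal_sub _ HN) as HS.
  split; [|split].
  - exists one, one. split. apply sub1; auto. split. apply sub1; auto. rewrite mulg1; auto.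
  - intros x y [k [n [Hk [Hn ->]]]] [k' [n' [Hk' [Hn' ->]]]].
    exists (mul k k'), (mul (mul (mul (inv k') n) k') n'). split. apply subM; auto.
    split. apply subM; auto. apply normal_conj'; auto.
    rewrite !mulA. rewrite <- (mulA _ k k' (inv k')), mulgV, mulg1. reflexivity.
  - intros x [k [n [Hk [Hn ->]]]].
    exists (inv k), (mul (mul k (inv n)) (inv k)). split. apply subV; auto.
    split. apply normal_conj; auto. apply subV; auto.
    rewrite !mulA, mulVg, mul1g, invM. reflexivity.
Qed.

Lemma KN_K k : K k -> KN k.
Proof. intro Hk. exists k, one. split; auto. split. apply sub1, normal_sub, HN. rewrite mulg1; auto. Qed.
Lemma KN_N n : N n -> KN n.
Proof. intro Hn. exists one, n. split. apply sub1; auto. split; auto. rewrite mul1g; auto. Qed.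

Definition Cr (a b : H) : Prop := KN (mul b (inv a)).
Definition rep (a : H) : H := epsilon (inhabits one) (Cr a).

Lemma Cr_refl a : Cr a a.
Proof. unfold Cr. rewrite mulgV. apply sub1, KN_sub. Qed.
Lemma Cr_sym a b : Cr a b -> Cr b a.
Proof. unfold Cr. intro E. apply subV in E; [|apply KN_sub]. rewrite invM, invK in E. auto. Qed.
Lemma Cr_trans a b c : Cr a b -> Cr b c -> Cr a c.
Proof.
  unfold Cr. intros E1 E2. replace (mul c (inv a)) with (mul (mul c (inv b)) (mul b (inv a))).
  apply subM; auto; apply KN_sub. rewrite !mulA, mulgKV. reflexivity.
Qed.
Lemma rep_C a : Cr a (rep a).
Proof. unfold rep. apply (epsilon_spec (inhabits one) (Cr a)). exists a. apply Cr_refl. Qed.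
Lemma rep_eq a b : Cr a b -> rep a = rep b.
Proof.
  intro E. unfold rep. f_equal. apply functional_extensionality. intro x.
  apply propositional_extensionality. split; intro Hx.
  - apply (Cr_trans _ a). apply Cr_sym; auto. auto.
  - apply (Cr_trans _ b); auto.
Qed.
Lemma rep_C_eq a b : rep a = rep b -> Cr a b.
Proof. intro E. apply (Cr_trans _ (rep a)). apply rep_C. rewrite E. apply Cr_sym, rep_C. Qed.
Lemma rep_rep a : rep (rep a) = rep a.
Proof. symmetry. apply rep_eq. apply rep_C. Qed.
Lemma KN_rep a : KN (mul a (inv (rep a))).
Proof. pose proof (rep_C a) as E. apply Cr_sym in E. exact E. Qed.
Lemma rep_KN m a : KN m -> rep (mul m a) = rep a.
Proof. intro Hm. symmetry. apply rep_eq. unfold Cr. rewrite mulgK. auto. Qed.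
Lemma KN_rep1 : KN (rep one).
Proof. pose proof (rep_C one) as E. unfold Cr in E. rewrite inv1, mulg1 in E. auto. Qed.
Lemma rep_one_KN x : rep x = rep one -> KN x.
Proof.
  intro E. apply rep_C_eq in E. unfold Cr in E. rewrite mul1g in E.
  apply (subV_iff _ KN_sub). auto.
Qed.

Section Word.
Context (h0 : H) (w : list (bool * H)).

Definition step (e : bool) (b : H) : H :=
  if e then phi (mul (mul b (inv (rep b))) (rep one))
  else mul (mul (phinv phi b) (inv (rep (phinv phi b)))) (rep one).

Fixpoint pt (l : list (bool * H)) : H :=
  match l with
  | [] => h0
  | (e, g) :: l' => mul g (step e (pt l'))
  end.

Fixpoint cs (l : list (bool * H)) : list ((H * nat) * (H * nat)) :=
  match l with
  | [] => []
  | (e, g) :: l' =>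
     (if e then ((rep (pt l'), length l'), (rep one, S (length l')))
      else ((rep one, S (length l')), (rep (phinv phi (pt l')), length l'))) :: cs l'
  end.

Lemma cs_labels l c : In c (cs l) -> snd (fst c) <= length l /\ snd (snd c) <= length l.
Proof.
  induction l as [|[e g] l IH]; simpl; [tauto|]. intros [<-|Hc].
  - destruct e; simpl; lia.
  - apply IH in Hc. lia.
Qed.

Lemma cs_rep l c : In c (cs l) -> rep (fst (fst c)) = fst (fst c) /\ rep (fst (snd c)) = fst (fst (snd c), 0).
Proof.
  induction l as [|[e g] l IH]; simpl; [tauto|]. intros [<-|Hc].
  - destruct e; simpl; rewrite !rep_rep; auto.
  - apply IH in Hc. auto.
Qed.

Lemma cs_nodup l : reduced phi KN l -> NoDup (map fst (cs l)) /\ NoDup (map snd (cs l)).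
Proof.
  induction l as [|[e g] l IH]; intro Hr; simpl.
  - split; constructor.
  - destruct (IH (reduced_tail _ _ _ _ Hr)) as [IH1 IH2].
    split; constructor; auto.
    + intro Hin. apply in_map_iff in Hin. destruct Hin as [c [Ec Hc]].
      destruct l as [|[e' g'] l']; [contradiction|].
      destruct Hc as [<-|Hc].
      * destruct e, e'; simpl in Ec; inversion Ec; try lia.
        destruct Hr as [Hb _]. apply Hb. left. split; auto. split; auto.
        first [apply rep_one_KN in H1 | symmetry in H1; apply rep_one_KN in H1].
        simpl in H1. unfold step in H1.
        apply (subM_r _ KN_sub) in H1; auto.
        apply subM; [apply KN_sub| |apply KN_rep1]. apply KN_rep.
      * apply cs_labels in Hc. destruct e; simpl in Ec; rewrite Ec in Hc; simpl in Hc; simpl; lia.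
    + intro Hin. apply in_map_iff in Hin. destruct Hin as [c [Ec Hc]].
      destruct l as [|[e' g'] l']; [contradiction|].
      destruct Hc as [<-|Hc].
      * destruct e, e'; simpl in Ec; inversion Ec; try lia.
        destruct Hr as [Hb _]. apply Hb. right. split; auto. split; auto.
        first [apply rep_one_KN in H1 | symmetry in H1; apply rep_one_KN in H1].
        simpl in H1. unfold step in H1.
        rewrite (phinv_hom phi Haut), (phinv_phi phi Haut) in H1.
        apply (subM_r _ KN_sub) in H1; auto.
        apply subM; [apply KN_sub| |apply KN_rep1]. apply KN_rep.
      * apply cs_labels in Hc. destruct e; simpl in Ec; rewrite Ec in Hc; simpl in Hc; simpl; lia.
Qed.


Definition nn := length w.
Definition repp (x : H * nat) : Prop := rep (fst x) = fst x.

Definition uu (s : H * nat -> H * nat) (p : H * nat) : H * nat :=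
  let q := s (rep (fst p), snd p) in (mul (mul (fst p) (inv (rep (fst p)))) (fst q), snd q).

Lemma uu_K s k p : K k -> uu s (mul k (fst p), snd p) = (mul k (fst (uu s p)), snd (uu s p)).
Proof.
  intro Hk. unfold uu. simpl. rewrite (rep_KN k (fst p) (KN_K k Hk)). rewrite !mulA. reflexivity.
Qed.

Lemma uu_RN s p p' : RN N p p' -> RN N (uu s p) (uu s p').
Proof.
  destruct p as [a y], p' as [b y']. intros [E Hn]. simpl in E, Hn. subst y'.
  assert (Er : rep a = rep b).
  { apply rep_eq. unfold Cr. apply KN_N.
    replace (mul b (inv a)) with (mul (mul a (mul (inv a) b)) (inv a)).
    apply normal_conj; auto. rewrite mulKVg. reflexivity. }
  unfold uu. simpl. rewrite <- Er. split; simpl; auto.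
  rewrite conj_alg. apply normal_conj; auto.
Qed.

Lemma uu_inv s si : (forall x, s (si x) = x) -> (forall x, repp x -> repp (si x)) ->
  forall p, uu s (uu si p) = p.
Proof.
  intros A B [a y]. unfold uu. simpl.
  set (q := si (rep a, y)).
  assert (Hq : repp q) by (apply B; unfold repp; simpl; apply rep_rep).
  unfold repp in Hq.
  assert (E1 : rep (mul (mul a (inv (rep a))) (fst q)) = fst q).
  { rewrite rep_KN. auto. apply KN_rep. }
  rewrite E1. rewrite <- Hq at 1. rewrite Hq. rewrite <- surjective_pairing.
  unfold q. rewrite A. simpl. rewrite mulgK, mulgKV. reflexivity.
Qed.

Lemma uu_Ib s : (forall x, Ib nn (s x) <-> Ib nn x) -> forall p, Ib nn (uu s p) <-> Ib nn p.
Proof. intros A [a y]. unfold uu. unfold Ib in *. simpl. rewrite A. simpl. tauto. Qed.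

Definition Lh (h : H) : perm (H * nat) (RN N) (Ib nn).
Proof.
  refine (Perm (fun p => (mul h (fst p), snd p)) (fun p => (mul (inv h) (fst p), snd p)) _ _ _ _ _).
  - intros [a y]. simpl. rewrite mulKVg. auto.
  - intros [a y]. simpl. rewrite mulKg. auto.
  - intros [a y] [b y'] [E Hn]. split; simpl in *; auto. rewrite invM, mulA, mulgKV. auto.
  - intros [a y] [b y'] [E Hn]. split; simpl in *; auto. rewrite invM, mulA, invK, mulgK. auto.
  - intros [a y]. unfold Ib. simpl. tauto.
Defined.

Lemma Phi_RN a b : N (mul (inv a) b) -> N (mul (inv (phi a)) (phi b)).
Proof.
  intro Hn. rewrite <- (hom_inv phi (phi_hom phi Haut)), <- (phi_hom phi Haut). apply (proj1 (Nphi _)). auto.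
Qed.
Lemma Phii_RN a b : N (mul (inv a) b) -> N (mul (inv (phinv phi a)) (phinv phi b)).
Proof.
  intro Hn. apply Nphi. rewrite (phi_hom phi Haut), (hom_inv phi (phi_hom phi Haut)), !(phi_phinv phi Haut). auto.
Qed.

Definition sperm (s si : H * nat -> H * nat)
  (A : forall x, s (si x) = x) (B : forall x, si (s x) = x)
  (R1 : forall x, repp x -> repp (s x)) (R2 : forall x, repp x -> repp (si x))
  (I1 : forall x, Ib nn (s x) <-> Ib nn x) (I2 : forall x, Ib nn (si x) <-> Ib nn x)
  : perm (H * nat) (RN N) (Ib nn).
Proof.
  refine (Perm (fun p => let q := uu s p in (phi (fst q), snd q))
               (fun p => uu si (phinv phi (fst p), snd p)) _ _ _ _ _).
  - intros [a y]. cbv beta zeta. rewrite uu_inv; auto. simpl. rewrite (phi_phinv phi Haut). auto.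
  - intros p. cbv beta zeta. cbn [fst snd]. rewrite (phinv_phi phi Haut), <- surjective_pairing. apply uu_inv; auto.
  - intros p p' E. pose proof (uu_RN s p p' E) as [E1 E2]. split; simpl; auto. apply Phi_RN; auto.
  - intros [a y] [b y'] [E Hn]. simpl in *. apply uu_RN. split; simpl; auto. apply Phii_RN; auto.
  - intros p. pose proof (uu_Ib s I1 p). unfold Ib in *. simpl. auto.
Defined.


Lemma sperm_fw s si A B R1 R2 I1 I2 p :
  fw (sperm s si A B R1 R2 I1 I2) p = (phi (fst (uu s p)), snd (uu s p)).
Proof. reflexivity. Qed.
Lemma sperm_bw s si A B R1 R2 I1 I2 p :
  bw (sperm s si A B R1 R2 I1 I2) p = uu si (phinv phi (fst p), snd p).
Proof. reflexivity. Qed.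
Lemma Lh_fw h p : fw (Lh h) p = (mul h (fst p), snd p).
Proof. reflexivity. Qed.

Lemma core : reduced phi KN w -> (w = [] -> ~ N h0) ->
  exists rho : G -> SymG (H * nat) (RN N) (Ib nn), is_hom rho /\
    ~ RN N (fw (rho (eval i t h0 w) : perm _ _ _) (one, 0)) (one, 0).
Proof.
  intros Hr Hh0.
  destruct (cs_nodup w Hr) as [ND1 ND2].
  destruct (extend (cs w) ND1 ND2) as [s [si [A [B [C D]]]]].
  assert (R1 : forall x, repp x -> repp (s x)).
  { intros x Hx. apply (D repp); auto. intros c Hc. apply cs_rep in Hc. unfold repp. simpl in Hc. tauto. }
  assert (R2 : forall x, repp x -> repp (si x)).
  { intros x Hx. apply (D repp). intros c Hc. apply cs_rep in Hc. unfold repp. simpl in Hc. tauto. rewrite A. auto. }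
  assert (I1 : forall x, Ib nn (s x) <-> Ib nn x).
  { apply D. intros c Hc. apply cs_labels in Hc. unfold Ib, nn. tauto. }
  assert (I2 : forall x, Ib nn (si x) <-> Ib nn x).
  { intro x. rewrite <- (I1 (si x)), A. tauto. }
  set (sp := sperm s si A B R1 R2 I1 I2).
  set (L := SymG (H * nat) (RN N) (Ib nn)).
  assert (HLh : is_hom (fun h => (Lh h : L))).
  { intros a b. apply perm_ext. intros [x y]. simpl. rewrite mulA. auto. }
  assert (Hrel : forall k, K k -> mul (mul (sp : L) (Lh k : L)) (inv (sp : L)) = (Lh (phi k) : L)).
  { intros k Hk. apply perm_ext. intros [x y].
    change (fw sp (fw (Lh k) (bw sp (x, y))) = fw (Lh (phi k)) (x, y)).
    unfold sp. rewrite sperm_bw, Lh_fw, sperm_fw, Lh_fw. cbn [fst snd].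
    idtac.
    rewrite uu_K; auto. rewrite uu_inv; auto. cbn [fst snd].
    rewrite (phi_hom phi Haut), (phi_phinv phi Haut). reflexivity. }
  destruct HNN as [Hi [Hrl Hu]].
  destruct (Hu L (fun h => Lh h) sp HLh Hrel) as [[rho [Hrho [Hri Hrt]]] _].
  assert (T : forall l, (forall c, In c (cs l) -> s (fst c) = snd c) ->
             fw (rho (eval i t h0 l) : perm _ _ _) (one, 0) = (pt l, length l)).
  { induction l as [|[e g] l IH]; intro Hc.
    - simpl. rewrite Hri. rewrite Lh_fw. simpl. rewrite mulg1. auto.
    - cbn [eval]. rewrite !Hrho.
      change (fw (rho (i g) : perm _ _ _) (fw (rho (tpow t e) : perm _ _ _)
                (fw (rho (eval i t h0 l) : perm _ _ _) (one, 0))) = (pt ((e, g) :: l), length ((e, g) :: l))).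
      rewrite IH by (intros c Hc'; apply Hc; simpl; auto).
      rewrite Hri, Lh_fw.
      assert (Hhd := Hc _ (or_introl eq_refl)).
      destruct e; simpl tpow.
      + rewrite Hrt. unfold sp. rewrite sperm_fw. simpl in Hhd.
        unfold uu. cbn [fst snd]. rewrite Hhd. cbn [fst snd pt length step]. reflexivity.
      + rewrite (hom_inv rho Hrho), Hrt.
        change (fw (inv (sp : L)) (pt l, length l)) with (bw sp (pt l, length l)).
        unfold sp. rewrite sperm_bw. simpl in Hhd.
        assert (Hsi : si (rep (phinv phi (pt l)), length l) = (rep one, S (length l))).
        { rewrite <- Hhd, B. auto. }
        unfold uu. cbn [fst snd]. rewrite Hsi. cbn [fst snd pt length step]. reflexivity. }
  exists rho. split; auto.
  rewrite (T w C). intros [E Hn]. simpl in E.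
  destruct w as [|a w']; simpl in E; [|discriminate].
  simpl in Hn. rewrite mulg1 in Hn. apply (Hh0 eq_refl). apply (subV_iff _ (normal_sub _ HN)). auto.
Qed.
End Word.
End Core.


Lemma NoDup_map_inj {A B : Type} (f : A -> B) (l : list A) :
  NoDup l -> (forall x y, In x l -> In y l -> f x = f y -> x = y) -> NoDup (map f l).
Proof.
  induction 1 as [|a l Ha Hl IH]; intros Hinj; simpl; constructor.
  - intro Hin. apply in_map_iff in Hin. destruct Hin as [y [Ey Hy]].
    assert (y = a) by (apply Hinj; simpl; auto). subst. contradiction.
  - apply IH. intros x y Hx Hy E. apply Hinj; simpl; auto.
Qed.

Lemma alg_mul {G : group} (p q r s : G) :
  mul (inv (mul p q)) (mul r s) = mul (mul (mul (inv q) (mul (inv p) r)) q) (mul (inv q) s).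
Proof. rewrite invM, !mulA, mulgK. reflexivity. Qed.

Lemma alg_inv {G : group} (p r : G) :
  mul (inv (inv p)) (inv r) = mul (mul p (inv (mul (inv p) r))) (inv p).
Proof. rewrite invK, invM, invK, !mulA, mulgK. reflexivity. Qed.

Section Char.
Context {H : group} (phi : H -> H) (Haut : is_aut phi).

Definition pw (k : nat) (h : H) : H := Nat.iter k phi h.
Definition qw (k : nat) (h : H) : H := Nat.iter k (phinv phi) h.

Lemma pw_hom k : is_hom (pw k).
Proof.
  induction k; intros x y; simpl. reflexivity.
  unfold pw in *. simpl. rewrite IHk. apply (phi_hom phi Haut).
Qed.
Lemma pw_qw k h : pw k (qw k h) = h.
Proof.
  revert h; induction k; intro h. reflexivity.
  unfold pw, qw in *. rewrite Nat.iter_succ_r. rewrite Nat.iter_succ.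
  rewrite (phi_phinv phi Haut). apply IHk.
Qed.

Lemma normal_fi_pw (N' : H -> Prop) : is_normal_subgroup N' -> finite_index N' ->
  forall m, is_normal_subgroup (fun h => forall k, k < m -> N' (pw k h)) /\
            finite_index (fun h => forall k, k < m -> N' (pw k h)).
Proof.
  intros HN Hfi m. induction m as [|m [IH1 IH2]].
  - split.
    + apply (normal_ext (fun _ => True)). intros; split; auto; intros; lia. apply normal_all.
    + apply (fi_ext (fun _ => True)). intros; split; auto; intros; lia. apply fi_all.
  - assert (E : forall h, ((forall k, k < m -> N' (pw k h)) /\ N' (pw m h)) <-> (forall k, k < S m -> N' (pw k h))).
    { intro h. split.
      - intros [A B] k Hk. destruct (Nat.eq_dec k m). subst; auto. apply A; lia.
      - intros A. split. intros; apply A; lia. apply A; lia. }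
    split.
    + apply (normal_ext _ _ E). apply normal_inter; auto. apply normal_preimage; auto. apply pw_hom.
    + apply (fi_ext _ _ E). apply fi_inter.
      * apply normal_sub; auto.
      * apply normal_sub. apply normal_preimage; auto. apply pw_hom.
      * auto.
      * apply fi_preimage; auto. apply pw_hom. apply normal_sub; auto.
Qed.

Lemma char_core : finitely_generated H -> forall N' : H -> Prop,
  is_normal_subgroup N' -> finite_index N' ->
  exists N : H -> Prop, is_normal_subgroup N /\ finite_index N /\
    (forall h, N h -> N' h) /\ (forall h, N h <-> N (phi h)).
Proof.
  intros [Sg HS] N' HN Hfi.
  pose proof (normal_sub _ HN) as HN'.
  destruct Hfi as [RL HRL].
  set (canon := fun z => epsilon (inhabits (@one H)) (fun r => In r RL /\ N' (mul (inv r) z))).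
  assert (Hc : forall z, In (canon z) RL /\ N' (mul (inv (canon z)) z)).
  { intro z. unfold canon. apply (epsilon_spec (inhabits one) (fun r => In r RL /\ N' (mul (inv r) z))).
    destruct (HRL z) as [r Hr]. eauto. }
  set (tup := fun k => map (fun s => canon (pw k s)) Sg).
  set (M := length (all_lists RL (length Sg))).
  assert (PH : exists a b, a < b /\ tup a = tup b).
  { apply NNPP. intro Hno.
    assert (ND : NoDup (map tup (seq 0 (S M)))).
    { apply NoDup_map_inj. apply seq_NoDup.
      intros x y _ _ E. destruct (Nat.lt_trichotomy x y) as [Hlt|[Heq|Hgt]]; auto.
      - exfalso. apply Hno. eauto.
      - exfalso. apply Hno. exists y, x. auto. }
    apply NoDup_incl_length with (l' := all_lists RL (length Sg)) in ND.
    - rewrite length_map, length_seq in ND. unfold M in ND. lia.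
    - intros c Hin. apply in_map_iff in Hin. destruct Hin as [k [<- _]].
      apply all_lists_in. unfold tup. apply length_map.
      intros x Hx. unfold tup in Hx. apply in_map_iff in Hx. destruct Hx as [s [<- _]]. apply Hc. }
  destruct PH as [a [b [Hab Etup]]].
  assert (Eq : forall h, N' (mul (inv (pw a h)) (pw b h))).
  { intro h. specialize (HS h). induction HS as [|s Hs|x y _ IHx _ IHy|x _ IHx].
    - rewrite !(hom_one _ (pw_hom _)), mulVg. apply sub1; auto.
    - assert (E := map_eq_in _ _ _ _ Etup Hs). simpl in E.
      rewrite <- (coset_alg (canon (pw a s))). rewrite E at 2.
      apply subM; auto. apply subV; auto. apply Hc. apply Hc.
    - rewrite !pw_hom, alg_mul. apply subM; auto. apply normal_conj'; auto.
    - rewrite !(hom_inv _ (pw_hom _)), alg_inv. apply normal_conj; auto. apply subV; auto. }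
  set (p := b - a).
  assert (Ep : forall c, N' (mul (inv c) (pw p c))).
  { intro c. specialize (Eq (qw a c)). replace b with (p + a) in Eq by (unfold p; lia).
    unfold pw in Eq at 2. rewrite Nat.iter_add in Eq. fold (pw a (qw a c)) in Eq.
    rewrite pw_qw in Eq. exact Eq. }
  assert (Np : forall c, N' c <-> N' (pw p c)).
  { intro c. split; intro Hc'.
    - rewrite <- (mulKVg c (pw p c)). apply subM; auto.
    - apply (subV_iff _ HN'). rewrite <- (mulgK (pw p c) (inv c)). apply subM; auto. apply subV; auto. }
  destruct (normal_fi_pw N' HN (ex_intro _ RL HRL) p) as [Hn Hf].
  exists (fun h => forall k, k < p -> N' (pw k h)). split; auto. split; auto. split.
  - intros h Hh. apply (Hh 0). unfold p; lia.
  - intro h. split; intros Hh k Hk.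
    + unfold pw. rewrite <- Nat.iter_succ_r. fold (pw (S k) h).
      destruct (Nat.eq_dec (S k) p) as [E|E].
      * rewrite E. apply (proj1 (Np h)). apply (Hh 0). lia.
      * apply Hh. lia.
    + destruct k as [|k].
      * simpl. apply Np. replace p with (S (p - 1)) by lia. unfold pw. rewrite Nat.iter_succ_r.
        fold (pw (p - 1) (phi h)). apply Hh. lia.
      * unfold pw. rewrite Nat.iter_succ_r. fold (pw k (phi h)). apply Hh. lia.
Qed.
End Char.


Fixpoint zs {H : group} (phi : H -> H) (l : list (bool * H)) : list H :=
  match l with
  | (e1, _) :: tl =>
      match tl with
      | (e2, g2) :: _ =>
          (if e1 then (if e2 then [] else [g2]) else (if e2 then [phinv phi g2] else [])) ++ zs phi tl
      | [] => []
      end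
  | [] => []
  end.

Lemma zs_reduced {H : group} (phi : H -> H) (K : H -> Prop) l :
  reduced phi K l -> forall z, In z (zs phi l) -> ~ K z.
Proof.
  induction l as [|[e1 g1] l IH]; simpl; [tauto|].
  destruct l as [|[e2 g2] l]; [tauto|].
  intros [Hb Hr] z Hz. apply in_app_or in Hz. destruct Hz as [Hz|Hz]; [|apply IH; auto].
  intro Kz. apply Hb. unfold bad.
  destruct e1, e2; simpl in Hz; try tauto; destruct Hz as [<-|[]]; auto.
Qed.

Lemma reduced_zs {H : group} (phi : H -> H) (P : H -> Prop) l :
  (forall z, In z (zs phi l) -> ~ P z) -> reduced phi P l.
Proof.
  induction l as [|[e1 g1] l IH]; simpl; [tauto|].
  destruct l as [|[e2 g2] l]; [tauto|].
  intros Hz. split.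
  - intros [[-> [-> Hp]]|[-> [-> Hp]]]; eapply Hz; eauto; apply in_or_app; left; simpl; auto.
  - apply IH. intros z Hz'. apply Hz. apply in_or_app. right. auto.
Qed.

Lemma KN_mono {H : group} (K N N' : H -> Prop) z : (forall h, N h -> N' h) -> KN K N z -> KN K N' z.
Proof. intros Hs [k [n [Hk [Hn E]]]]. exists k, n. auto. Qed.

Lemma avoid {H : group} (K : H -> Prop) : residually_separable K ->
  forall zl : list H, (forall z, In z zl -> ~ K z) ->
  exists N, is_normal_subgroup N /\ finite_index N /\ forall z, In z zl -> ~ KN K N z.
Proof.
  intros Hsep zl. induction zl as [|z zl IH]; intro Hz.
  - exists (fun _ => True). split. apply normal_all. split. apply fi_all. simpl; tauto.
  - destruct IH as [N1 [HN1 [Hf1 Ha1]]]. intros; apply Hz; simpl; auto.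
    destruct (Hsep z) as [Nz [HNz [Hfz Haz]]]. apply Hz; simpl; auto.
    exists (fun h => Nz h /\ N1 h). split. apply normal_inter; auto. split.
    apply fi_inter; auto; apply normal_sub; auto.
    intros z' [<-|Hz'] HK.
    + apply Haz. apply (KN_mono K _ _ _ (fun h H => proj1 H) HK).
    + apply (Ha1 z' Hz'). apply (KN_mono K _ _ _ (fun h H => proj2 H) HK).
Qed.

Lemma normal_triv {H : group} : is_normal_subgroup (fun h : H => h = one).
Proof.
  split; [split; [|split]|].
  - auto.
  - intros x y -> ->. apply mulg1.
  - intros x ->. apply inv1.
  - intros g x ->. rewrite mulg1. apply mulgV.
Qed.

Lemma rho_nontriv {H G : group} (N : H -> Prop) (HN : is_subgroup N) n
  (rho : G -> SymG (H * nat) (RN N) (Ib n)) (Hrho : is_hom rho) x :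
  ~ RN N (fw (rho x : perm _ _ _) (one, 0)) (one, 0) -> x <> one.
Proof.
  intros Hn E. subst. apply Hn. rewrite (hom_one rho Hrho). apply RN_refl; auto.
Qed.

Theorem theoremA (H : group) (phi : H -> H) (K : H -> Prop)
  (G : group) (i : H -> G) (t : G) :
  finitely_generated H ->
  is_aut phi ->
  is_proper_subgroup K ->
  is_HNN_extension phi K G i t ->
  (residually_finite G <-> residually_finite H /\ residually_separable K).
Proof.
  intros Hfg Haut [HK _] HNN.
  assert (Hi : is_hom i) by apply HNN.
  assert (Ntriv : forall h, (fun h : H => h = one) h <-> (fun h : H => h = one) (phi h)).
  { intro h. split; intro E. rewrite E. apply (hom_one _ (phi_hom phi Haut)).
    destruct Haut as [Hh [Hinj _]]. apply Hinj. rewrite E. symmetry. apply (hom_one _ Hh). }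
  split.
  - intro RFG. split.
    + intros x Hx.
      destruct (core phi K i t Haut HK HNN _ normal_triv Ntriv x [] I (fun _ => Hx)) as [rho [Hrho Hn]].
      apply rho_nontriv in Hn; auto. 2: apply normal_sub, normal_triv.
      destruct (RFG _ Hn) as [NG [HNG [HfG HxG]]].
      exists (fun h => NG (i h)). split. apply normal_preimage; auto. split.
      apply fi_preimage; auto. apply normal_sub; auto. auto.
    + intros x Hx.
      set (w := [(true, @one H); (false, x)]).
      assert (Hr : reduced phi (KN K (fun h : H => h = one)) w).
      { simpl. split; auto. intros [[_ [_ [k [n [Hk [-> ->]]]]]]|[E _]]; [|discriminate].
        apply Hx. rewrite mulg1. auto. }
      destruct (core phi K i t Haut HK HNN _ normal_triv Ntriv (inv (phi x)) w Hr (fun E => ltac:(discriminate E))) as [rho [Hrho Hn]].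
      apply rho_nontriv in Hn; auto. 2: apply normal_sub, normal_triv.
      destruct (RFG _ Hn) as [NG [HNG [HfG HxG]]].
      pose proof (normal_sub _ HNG) as HNGs.
      assert (Hip : is_hom (fun h => i (phi h))) by (apply hom_comp; auto; apply phi_hom; auto).
      exists (fun h => NG (i h) /\ NG (i (phi h))). split.
      { apply normal_inter; apply normal_preimage; auto. }
      split.
      { apply fi_inter; try (apply normal_sub; apply normal_preimage; auto).
        apply fi_preimage; auto. apply (fi_preimage (fun h => i (phi h))); auto. }
      intros [k [n [Hk [[Hn1 Hn2] Ex]]]]. apply HxG.
      unfold w. simpl eval. simpl tpow. subst x.
      rewrite (hom_one i Hi), mul1g.
      rewrite !(phi_hom phi Haut), invM, !Hi, !(hom_inv i Hi).
      assert (Hrel : mul (mul t (i k)) (inv t) = i (phi k)) by (apply HNN; auto).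
      match goal with |- NG ?X => replace X with (mul (mul (mul (mul t (i k)) (inv t))
                    (mul (mul (mul t (i n)) (inv t)) (inv (i (phi n))))) (inv (i (phi k)))) end.
      2: { rewrite !mulA, mulgKV. reflexivity. }
      rewrite Hrel. apply normal_conj; auto. apply subM; auto.
      apply normal_conj; auto. apply subV; auto.
  - intros [RFH Hsep] x Hx.
    destruct (all_words phi K i t Haut HNN x) as [h0 [l [Hr ->]]].
    destruct (avoid K Hsep (zs phi l) (zs_reduced phi K l Hr)) as [N1 [HN1 [Hf1 Ha1]]].
    assert (N0ex : exists N0 : H -> Prop, is_normal_subgroup N0 /\ finite_index N0 /\ (l = [] -> ~ N0 h0)).
    { destruct l as [|a l].
      - assert (Hh0 : h0 <> one). { intro E. apply Hx. subst. simpl. apply (hom_one i Hi). }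
        destruct (RFH h0 Hh0) as [N0 [A [B C]]]. exists N0. auto.
      - exists (fun _ => True). split. apply normal_all. split. apply fi_all. discriminate. }
    destruct N0ex as [N0 [HN0 [Hf0 Ha0]]].
    destruct (char_core phi Haut Hfg (fun h => N1 h /\ N0 h)) as [N [HN [HfN [HsN Nphi]]]].
    { apply normal_inter; auto. }
    { apply fi_inter; auto; apply normal_sub; auto. }
    assert (Hr' : reduced phi (KN K N) l).
    { apply reduced_zs. intros z Hz HKN. apply (Ha1 z Hz).
      apply (KN_mono K N); auto. intros h Hh. apply HsN; auto. }
    assert (Hh0' : l = [] -> ~ N h0).
    { intros E Hn. apply (Ha0 E). apply HsN; auto. }
    destruct (core phi K i t Haut HK HNN N HN Nphi h0 l Hr' Hh0') as [rho [Hrho Hn]].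
    exists (KerM N (nn l) rho). split. apply KerM_normal; auto. split. apply KerM_fi; auto.
    intro HM. apply Hn. apply HM. unfold Ib. simpl. lia.
Qed.
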